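(* Let $G$ be a finite group. The poset $\widetilde\Pi(G)$ is a chain (i.e., totally ordered) if and only if $G$ is a $p$-group for some prime $p$.
   Context: For a finite group $G$ and a subgroup $H\le G$, let $\pi_e(H)=\{o(x)\mid x\in H\}$ be the set of orders of elements of $H$. Let $\mathcal{L}(G)$ denote the set of all subgroups of $G$. Define an equivalence relation $\equiv$ on $\mathcal{L}(G)$ by $H_1\equiv H_2$ if and only if $\pi_e(H_1)=\pi_e(H_2)$, and denote the class of $H$ by $[H]$. The poset $\widetilde\Pi(G)$ is the set of equivalence classes $\mathcal{L}(G)/\!\equiv$ partially ordered by $[H_1]\lesssim[H_2]$ if and only if $\pi_e(H_1)\subseteq\pi_e(H_2)$. *)

(* Defs.v *)
From mathcomp Require Import all_boot all_fingroup all_solvable.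
Set Implicit Arguments. Unset Strict Implicit. Unset Printing Implicit Defensive.
Local Open Scope group_scope.

Definition pi_e_pred (gT : finGroupType) (H : {set gT}) : pred nat :=
  fun n => [exists x in H, #[x] == n].

(* The poset
   Pi~(G) = L(G)/== ordered by [H1] <= [H2] iff pi_e(H1) ⊆ pi_e(H2) is a chain
   iff any two subgroups of G have comparable element-order sets. *)
Definition pi_e_le (gT : finGroupType) (H1 H2 : {set gT}) : Prop :=
  forall n, pi_e_pred H1 n -> pi_e_pred H2 n.

Definition Pi_tilde_is_chain (gT : finGroupType) (G : {group gT}) : Prop :=
  forall H1 H2 : {group gT}, H1 \subset G -> H2 \subset G ->
    pi_e_le H1 H2 \/ pi_e_le H2 H1.

(* Main.v *)
Require Import Defs.
From mathcomp Require Import all_boot all_fingroup all_solvable.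
Local Open Scope group_scope.

Lemma max_ord_elt (gT : finGroupType) (H : {group gT}) :
  exists2 a, a \in H & forall x, x \in H -> #[x] <= #[a].
Proof.
case: (@arg_maxnP gT 1 (mem H) (fun x => #[x]) (group1 H)) => a Ha Hmax.
by exists a.
Qed.

Lemma p_elt_pow (gT : finGroupType) p (x : gT) :
  prime p -> p.-elt x -> #[x] = (p ^ logn p #[x])%N.
Proof. by move=> pp px; rewrite -p_part part_pnat_id. Qed.

Lemma pgroup_le (gT : finGroupType) p (H1 H2 : {group gT}) a1 a2 :
  prime p -> p.-group H1 -> p.-group H2 -> a1 \in H1 -> a2 \in H2 ->
  (forall x, x \in H1 -> #[x] <= #[a1]) -> #[a1] <= #[a2] -> pi_e_le H1 H2.
Proof.
move=> pp pH1 pH2 a1H a2H max1 le12 n /existsP [x /andP [xH /eqP <-]].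
apply/existsP.
have px := mem_p_elt pH1 xH.
have pa2 := mem_p_elt pH2 a2H.
set i := logn p #[x]; set k := logn p #[a2].
have Ex : #[x] = (p ^ i)%N by apply: p_elt_pow.
have Ea : #[a2] = (p ^ k)%N by apply: p_elt_pow.
have p1 : 1 < p by apply: prime_gt1.
have ik : i <= k.
  rewrite -(leq_exp2l _ _ p1) -Ex -Ea.
  exact: leq_trans (max1 x xH) le12.
exists (a2 ^+ (p ^ (k - i))); rewrite groupX //=.
have Ek : (p ^ k = p ^ (k - i) * p ^ i)%N by rewrite -expnD subnK.
rewrite orderXdiv; last by rewrite Ea Ek dvdn_mulr.
by rewrite Ea Ek mulKn ?expn_gt0 ?(ltnW p1) // Ex.
Qed.

Theorem theorem2p1 (gT : finGroupType) (G : {group gT}) :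
  Pi_tilde_is_chain G <-> exists p : nat, prime p /\ (p.-group G)%g.
Proof.
split.
- move=> ch.
  have key : forall p q, prime p -> prime q -> p %| #|G| -> q %| #|G| -> p = q.
    move=> p q pp pq dp dq.
    case: (Cauchy pp dp) => x xG ox.
    case: (Cauchy pq dq) => y yG oy.
    have sx : <[x]> \subset G by rewrite cycle_subG.
    have sy : <[y]> \subset G by rewrite cycle_subG.
    have inx : pi_e_pred <[x]> p by apply/existsP; exists x; rewrite cycle_id ox eqxx.
    have iny : pi_e_pred <[y]> q by apply/existsP; exists y; rewrite cycle_id oy eqxx.
    case: (ch _ _ sx sy) => [/(_ _ inx) | /(_ _ iny)] /existsP [z /andP [zH /eqP oz]].
    + have := order_dvdG zH; rewrite oz -orderE oy.
      by rewrite dvdn_prime2 // => /eqP.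
    + have := order_dvdG zH; rewrite oz -orderE ox.
      by rewrite dvdn_prime2 // => /eqP.
  have [G1 | Gn1] := leqP #|G| 1.
    exists 2; split => //; rewrite pgroupE.
    have -> : #|G| = 1%N by apply/eqP; rewrite eqn_leq G1 cardG_gt0.
    by [].
  exists (pdiv #|G|); split; first by rewrite pdiv_prime.
  rewrite pgroupE; apply/pnatP => // q pq dq.
  by rewrite inE (key q (pdiv #|G|)) // ?pdiv_prime ?pdiv_dvd.
- case=> p [pp pG] H1 H2 s1 s2.
  have pH1 := pgroupS s1 pG; have pH2 := pgroupS s2 pG.
  case: (@max_ord_elt _ H1) => a1 a1H m1.
  case: (@max_ord_elt _ H2) => a2 a2H m2.
  case: (leqP #[a1] #[a2]) => h.
  + by left; apply: (@pgroup_le _ p H1 H2 a1 a2 pp pH1 pH2 a1H a2H m1 h).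
  + by right; apply: (@pgroup_le _ p H2 H1 a2 a1 pp pH2 pH1 a2H a1H m2 (ltnW h)).
Qed.
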